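(* Let $k$ be a field of characteristic $0$ and consider the quiver with vertices $1,2$ and arrows $a$ from $1$ to $2$ and $a^\ast$ from $2$ to $1$, so that in the path algebra $a=e_1ae_2$, $a^\ast=e_2a^\ast e_1$. Let $B=ke_1\oplus ke_2$ and let $A$ be the path algebra with $e_1+aa^\ast$ inverted in $e_1Ae_1$ and $e_2+a^\ast a$ inverted in $e_2Ae_2$. Put \[P=\frac{\partial}{\partial a}\frac{\partial}{\partial a^\ast}+\frac12\Bigl(a\frac{\partial}{\partial a}\frac{\partial}{\partial a^\ast}a^\ast-a^\ast\frac{\partial}{\partial a^\ast}\frac{\partial}{\partial a}a\Bigr)\in(D_BA)_2,\] $\Phi_1=e_1+aa^\ast$, $\Phi_2=(e_2+a^\ast a)^{-1}$, $\Phi=\Phi_1+\Phi_2$. Then $(A,P,\Phi)$ is a (differential) quasi-Hamiltonian algebra: $\{P,P\}\equiv\frac16(E_1^3+E_2^3)\pmod{[D_BA,D_BA]}$ and $\{P,\Phi_i\}=-\frac12(E_i\Phi_i+\Phi_iE_i)$ for $i=1,2$.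
   Context: Inverting means adjoining $I\in e_1Ae_1$, $J\in e_2Ae_2$ with $I(e_1+aa^\ast)=(e_1+aa^\ast)I=e_1$, $J(e_2+a^\ast a)=(e_2+a^\ast a)J=e_2$. Unadorned tensor products are over $k$; $x\in A\otimes A$ is written $x'\otimes x''$. $D_{A/B}=\operatorname{Der}_B(A,A\otimes A)$ (derivations for the outer structure $b(x\otimes y)c=bx\otimes yc$ vanishing on $B$), an $A$-bimodule via the inner structure $(b\delta c)(x)=\delta(x)'c\otimes b\delta(x)''$; $D_BA=T_AD_{A/B}$, graded with $D_{A/B}$ in degree 1. $\frac{\partial}{\partial a},\frac{\partial}{\partial a^\ast}\in D_{A/B}$ are the unique elements with $\frac{\partial a}{\partial a}=e_1\otimes e_2$, $\frac{\partial a^\ast}{\partial a}=0$, $\frac{\partial a^\ast}{\partial a^\ast}=e_2\otimes e_1$, $\frac{\partial a}{\partial a^\ast}=0$; they generate $D_{A/B}$. The Schouten bracket on $D_BA$ is the unique double Gerstenhaber bracket $\{\!\{-,-\}\!\}$ (degree $-1$, with the graded Leibniz rule $\{\!\{x,yz\}\!\}=(-1)^{(|x|-1)|y|}y\{\!\{x,z\}\!\}+\{\!\{x,y\}\!\}z$ for outer multiplication, graded antisymmetry $\{\!\{x,y\}\!\}=-(-1)^{(|x|-1)(|y|-1)}\sigma_{(12)}\{\!\{y,x\}\!\}$, and the graded double Jacobi identity) with $\{\!\{u,v\}\!\}=0$ for $u,v\in A$, $\{\!\{\delta,u\}\!\}=\delta(u)$, and $\{\!\{\frac{\partial}{\partial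 c},\frac{\partial}{\partial d}\}\!\}=0$ for $c,d\in\{a,a^\ast\}$. $\{x,y\}=m(\{\!\{x,y\}\!\})$; $[D_BA,D_BA]$ is the span of graded commutators. $E_i(x)=xe_i\otimes e_i-e_i\otimes e_ix$. *)

(* Defs.v *)
(* Concrete model of the localized path algebra A and of
   D_B A = T_A D_{A/B} for the quiver 1 --a--> 2, 2 --a*--> 1. *)
From HB Require Import structures.
From mathcomp Require Import all_boot all_algebra.
From mathcomp Require Import finmap.
From mathcomp.multinomials Require Import monalg.

Set Implicit Arguments.
Unset Strict Implicit.
Unset Printing Implicit Defensive.

Import GRing.Theory.
Local Open Scope ring_scope.

(* Degree-one generators: false = d/da, true = d/da#.
   d/da = e2 (d/da) e1 and d/da# = e1 (d/da#) e2 for the inner structure,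
   so the vertex on the left of d/da is 2 and on its right is 1.          *)
Definition vtx := bool.
Definition v1 : vtx := false.
Definition v2 : vtx := true.
Definition thL (c : bool) : vtx := if c then v1 else v2.
Definition thR (c : bool) : vtx := if c then v2 else v1.

(* Put s_1 := e1 + a a#  (invertible in e1 A e1) and s_2 := e2 + a# a
   (invertible in e2 A e2).  The corner e_p A e_q of A has k-basis
   { s_p^n b_pq : n in Z } with b_11 = e1, b_12 = a, b_21 = a#, b_22 = e2
   (note a s_2 = s_1 a and a# s_1 = s_2 a#).
   A basis word (i, n0, [:: (c1,n1); ...; (cm,nm)], j) of D_B A stands for
      (s^n0 b) theta_c1 (s^n1 b) theta_c2 ... theta_cm (s^nm b)
   where the corner of each slot is forced: the first slot starts at i, the
   last one ends at j, and around theta_c the vertices are thL c / thR c.                               *)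
Definition Word := (vtx * int * seq (bool * int) * vtx)%type.

Definition deg (w : Word) : nat := size w.1.2.

Section DBA.
Variable k : fieldType.

Definition D := {malg k[Word]}.
Definition T2 := {malg k[(Word * Word)%type]}.
Definition T3 := {malg k[(Word * Word * Word)%type]}.

Definition bilin (K1 K2 K3 : choiceType) (f : K1 -> K2 -> {malg k[K3]})
  (x : {malg k[K1]}) (y : {malg k[K2]}) : {malg k[K3]} :=
  \sum_(w <- msupp x) \sum_(w' <- msupp y) (x@_w * y@_w') *: f w w'.
Definition lin (K1 K3 : choiceType) (f : K1 -> {malg k[K3]})
  (x : {malg k[K1]}) : {malg k[K3]} :=
  \sum_(w <- msupp x) x@_w *: f w.

(* left vertex of the last slot, right vertex of the first slot *)
Definition lastL (i : vtx) (l : seq (bool * int)) : vtx :=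
  last i (map (fun x => thR x.1) l).
Definition firstR (l : seq (bool * int)) (j : vtx) : vtx :=
  head j (map (fun x => thL x.1) l).
Definition shiftlast (n0 : int) (l : seq (bool * int)) (d : int)
  : int * seq (bool * int) :=
  match rev l with
  | [::] => (n0 + d, [::])
  | (c, n) :: r => (n0, rcons (rev r) (c, n + d))
  end.

Definition wmul (w w' : Word) : D :=
  let: (i, n0, l, j) := w in
  let: (i', n0', l', j') := w' in
  if j != i' then 0 else
  let p := lastL i l in
  let q := firstR l' j' in
  let base (d : int) : D :=
    let: (m0, ml) := shiftlast n0 l (n0' + d) in << (i, m0, ml ++ l', j') >> in
  (* b_pj b_jq = a a# = s1 - e1  or  a# a = s2 - e2  when p = q <> j *)
  if (p == q) && (p != j) then base 1 - base 0 else base 0.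

Definition dmul (x y : D) : D := bilin wmul x y.

Definition tens (x y : D) : T2 := bilin (fun w w' => << (w, w') >>) x y.
Definition tens3 (t : T2) (z : D) : T3 := bilin (fun ww w => << (ww, w) >>) t z.
Definition omulL (y : D) (t : T2) : T2 :=
  lin (fun ww => tens (dmul y << ww.1 >>) << ww.2 >>) t.
Definition omulR (t : T2) (z : D) : T2 :=
  lin (fun ww => tens << ww.1 >> (dmul << ww.2 >> z)) t.
Definition mult (t : T2) : D := lin (fun ww => wmul ww.1 ww.2) t.

Definition sgnz (z : int) : k := (-1) ^+ `|z|%N.

Definition sigma12 (t : T2) : T2 :=
  lin (fun ww => sgnz ((deg ww.1)%:Z * (deg ww.2)%:Z) *: << (ww.2, ww.1) >>) t.
Definition sigma123 (t : T3) : T3 :=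
  lin (fun www => sgnz ((deg www.2)%:Z * (deg www.1.1 + deg www.1.2)%:Z)
                   *: << (www.2, www.1.1, www.1.2) >>) t.

Definition homog (n : nat) (x : D) : Prop :=
  forall w, x@_w != 0 -> deg w = n.

Definition e (i : vtx) : D := << (i, 0%:Z, [::], i) >>.
Definition spow (i : vtx) (n : int) : D := << (i, n, [::], i) >>.
Definition arA : D := << (v1, 0%:Z, [::], v2) >>.
Definition arAs : D := << (v2, 0%:Z, [::], v1) >>.
Definition dA : D := << (v2, 0%:Z, [:: (false, 0%:Z)], v1) >>.
Definition dAs : D := << (v1, 0%:Z, [:: (true, 0%:Z)], v2) >>.

Definition thetab (c : bool) (p q : vtx) : T2 :=
  if (p == v1) && (q == v2) then (if c then 0 else tens (e v1) (e v2))
  else if (p == v2) && (q == v1) then (if c then tens (e v2) (e v1) else 0)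
  else 0.
(* theta_c(s_p) = theta(a) a# + a theta(a#)  or  theta(a#) a + a# theta(a) *)
Definition thetas (c : bool) (p : vtx) : T2 :=
  if p == v1 then omulR (thetab c v1 v2) arAs + omulL arA (thetab c v2 v1)
  else omulR (thetab c v2 v1) arA + omulL arAs (thetab c v1 v2).
(* theta_c(s_p^n) by the Leibniz rule *)
Definition thetapow (c : bool) (p : vtx) (n : int) : T2 :=
  match n with
  | Posz m => \sum_(i < m) omulR (omulL (spow p i%:Z) (thetas c p))
                                   (spow p (m%:Z - 1 - i%:Z))
  | Negz m => - \sum_(i < m.+1) omulR (omulL (spow p (- (i%:Z + 1))) (thetas c p))
                                      (spow p (- (m.+1%:Z - i%:Z)))
  end.
Definition thetaw (c : bool) (w : Word) : T2 :=
  let: (p, n, l, q) := w in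
  if l is [::] then
    omulR (thetapow c p n) << (p, 0%:Z, [::], q) >> + omulL (spow p n) (thetab c p q)
  else 0.
(* (b theta_c c')(x) = theta_c(x)' c' (x) b theta_c(x)''  (inner structure) *)
Definition evw (w : Word) (x : Word) : T2 :=
  let: (i0, n0, l, j1) := w in
  if l is [:: (c, n1)] then
    let b : D := << (i0, n0, [::], thL c) >> in
    let c' : D := << (thR c, n1, [::], j1) >> in
    lin (fun ww => tens (dmul << ww.1 >> c') (dmul b << ww.2 >>)) (thetaw c x)
  else 0.
Definition ev (delta x : D) : T2 := bilin evw delta x.

Definition brL (br : D -> D -> T2) (x : D) (t : T2) : T3 :=
  lin (fun ww => tens3 (br x << ww.1 >>) << ww.2 >>) t.

Definition double_gerstenhaber (br : D -> D -> T2) : Prop :=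
  [/\
      (forall c x y z, br (c *: x + y) z = c *: br x z + br y z
                   /\ br x (c *: y + z) = c *: br x y + br x z),
      (forall p q x y, homog p x -> homog q y ->
         forall ww, (br x y)@_ww != 0 -> (deg ww.1 + deg ww.2).+1 = (p + q)%N),
      (forall p q x y z, homog p x -> homog q y ->
         br x (dmul y z) =
           sgnz ((p%:Z - 1) * q%:Z) *: omulL y (br x z) + omulR (br x y) z),
      (forall p q x y, homog p x -> homog q y ->
         br x y = - (sgnz ((p%:Z - 1) * (q%:Z - 1)) *: sigma12 (br y x))) &
      (forall p q r x y z, homog p x -> homog q y -> homog r z ->
         brL br x (br y z)
         + sgnz ((p%:Z - 1) * (q + r)%:Z) *: sigma123 (brL br y (br z x))
         + sgnz ((r%:Z - 1) * (p + q)%:Z) *: sigma123 (sigma123 (brL br z (br x y)))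
         = 0)].

Definition double_schouten (br : D -> D -> T2) : Prop :=
  [/\ double_gerstenhaber br,
      (forall u v, homog 0 u -> homog 0 v -> br u v = 0),
      (forall delta u, homog 1 delta -> homog 0 u -> br delta u = ev delta u) &
      [/\ br dA dA = 0, br dA dAs = 0, br dAs dA = 0 & br dAs dAs = 0]].

Definition is_E (i : vtx) (E : D) : Prop :=
  homog 1 E /\
  forall x, homog 0 x -> ev E x = tens (dmul x (e i)) (e i) - tens (e i) (dmul (e i) x).

Definition gcomm (p q : nat) (x y : D) : D :=
  dmul x y - sgnz (p%:Z * q%:Z) *: dmul y x.

Definition onehalf : k := 2%:R^-1.
Definition Pbiv : D :=
  dmul dA dAs
  + onehalf *: (dmul (dmul arA (dmul dA dAs)) arAs - dmul (dmul arAs (dmul dAs dA)) arA).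
Definition Phi1 : D := e v1 + dmul arA arAs.
Definition Phi2 : D := spow v2 (-1).               (* (e2 + a# a)^-1 = s_2^-1 *)

End DBA.

(* Main.v *)
Require Import Defs.
From HB Require Import structures.
From mathcomp Require Import all_boot all_algebra.
From mathcomp Require Import finmap.
From mathcomp.multinomials Require Import monalg.

Set Implicit Arguments.
Unset Strict Implicit.
Unset Printing Implicit Defensive.

Import GRing.Theory.
Local Open Scope ring_scope.

Section Ratr.
Variable k : fieldType.
Hypothesis hk : [pchar k] =i pred0.

Lemma natr_neq0_k n : (n.+1)%:R != 0 :> k.
Proof. by move/pcharf0P: hk => ->. Qed.

Lemma nz_den_k (x : rat) : (denq x)%:~R != 0 :> k.
Proof.
have := denq_gt0 x; case: (denq x) => // -[|n] _ //.
rewrite -[X in X != 0]/((n.+1)%:R) ; exact: natr_neq0_k.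
Qed.

Lemma ratrB_k (x y : rat) : ratr (x - y) = ratr x - ratr y :> k.
Proof.
have injZtoQ: @injective rat int intr by apply: intr_inj.
have nz_den := nz_den_k.
apply: (canLR (mulfK (nz_den _))); apply: (mulIf (nz_den x)).
rewrite mulrAC mulrBl divfK ?nz_den // mulrAC -!rmorphM.
apply: (mulIf (nz_den y)); rewrite mulrAC mulrBl divfK ?nz_den //.
rewrite -!(rmorphM, rmorphB); congr _%:~R; apply: injZtoQ.
rewrite !(rmorphM, rmorphB) /= [_ - _]lock /= -lock !numqE.
by rewrite (mulrAC y) -!mulrBl -mulrA mulrAC !mulrA.
Qed.

Lemma ratrM_k (x y : rat) : ratr (x * y) = ratr x * ratr y :> k.
Proof.
have injZtoQ: @injective rat int intr by apply: intr_inj.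
have nz_den := nz_den_k.
rewrite /ratr mulrC mulrAC; apply: canLR (mulKf (nz_den _)) _; rewrite !mulrA.
do 2!apply: canRL (mulfK (nz_den _)) _; rewrite -!rmorphM; congr _%:~R.
apply: injZtoQ; rewrite !rmorphM [x * y]lock /= !numqE -lock.
by rewrite -!mulrA mulrA mulrCA -!mulrA (mulrCA y).
Qed.

Lemma ratr0_k : ratr 0 = 0 :> k.
Proof. exact: (@ratr_nat k 0). Qed.
Lemma ratr1_k : ratr 1 = 1 :> k.
Proof. exact: (@ratr_nat k 1). Qed.
Lemma ratrN_k x : ratr (- x) = - ratr x :> k.
Proof. by rewrite -sub0r ratrB_k ratr0_k sub0r. Qed.
Lemma ratrD_k x y : ratr (x + y) = ratr x + ratr y :> k.
Proof. have -> : x + y = x - - y by rewrite opprK. by rewrite ratrB_k ratrN_k opprK. Qed.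
Lemma ratrV_k x : ratr (x^-1) = (ratr x)^-1 :> k.
Proof.
have [->|nz] := eqVneq x 0; first by rewrite invr0 ratr0_k invr0.
have h1 : ratr x * ratr x^-1 = 1 :> k by rewrite -ratrM_k divff // ratr1_k.
have hx : ratr x != 0 :> k.
  by apply/eqP=> h; move: h1; rewrite h mul0r => /eqP; rewrite eq_sym oner_eq0.
by apply: (mulfI hx); rewrite h1 divff.
Qed.
Lemma ratr_nat_k n : ratr n%:R = n%:R :> k.
Proof. exact: ratr_nat. Qed.
End Ratr.


Section Lin.
Variable k : fieldType.
Hypothesis hk : [pchar k] =i pred0.

Section Gen.
Variables (K1 K3 : choiceType) (f : K1 -> {malg k[K3]}).

Lemma linEw x (d : {fset K1}) :
  (msupp x `<=` d)%fset -> lin f x = \sum_(w <- d) x@_w *: f w.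
Proof.
move=> le; rewrite /lin (big_fset_incl _ le) // => w _ /mcoeff_outdom ->.
by rewrite scale0r.
Qed.

Lemma linD x y : lin f (x + y) = lin f x + lin f y.
Proof.
rewrite (@linEw (x + y) (msupp x `|` msupp y)%fset) ?msuppD_le //.
rewrite (@linEw x (msupp x `|` msupp y)%fset) ?fsubsetUl //.
rewrite (@linEw y (msupp x `|` msupp y)%fset) ?fsubsetUr //.
by rewrite -big_split /=; apply: eq_bigr => w _; rewrite mcoeffD scalerDl.
Qed.

Lemma linZ c x : lin f (c *: x) = c *: lin f x.
Proof.
rewrite (@linEw (c *: x) (msupp x)) ?msuppZ_le // /lin scaler_sumr.
by apply: eq_bigr => w _; rewrite mcoeffZ scalerA.
Qed.

Lemma lin0 : lin f 0 = 0.
Proof. by rewrite /lin msupp0 big_seq_fset0. Qed.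

Lemma linN x : lin f (- x) = - lin f x.
Proof. by rewrite -scaleN1r linZ scaleN1r. Qed.

Lemma linU c w : lin f << c *g w >> = c *: f w.
Proof. by rewrite (@linEw _ [fset w]%fset) ?msuppU_le // big_seq_fset1 mcoeffUU. Qed.

Lemma lin_sum (I : Type) (r : seq I) (F : I -> {malg k[K1]}) :
  lin f (\sum_(i <- r) F i) = \sum_(i <- r) lin f (F i).
Proof. by elim: r => [|a r IH]; rewrite ?big_nil ?lin0 // !big_cons linD IH. Qed.
End Gen.

Lemma bilinE (K1 K2 K3 : choiceType) (f : K1 -> K2 -> {malg k[K3]}) x y :
  bilin f x y = lin (fun w => lin (f w) y) x.
Proof.
rewrite /bilin /lin; apply: eq_bigr => w _; rewrite scaler_sumr.
by apply: eq_bigr => w' _; rewrite scalerA.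
Qed.

Definition iM (K : choiceType) (l : seq (rat * K)) : {malg k[K]} :=
  \sum_(p <- l) << ratr p.1 *g p.2 >>.

Definition cscale (K : Type) (c : rat) (l : seq (rat * K)) :=
  [seq (c * p.1, p.2) | p <- l].
Definition cneg (K : Type) (l : seq (rat * K)) := cscale (-1) l.
Definition clin (K1 K3 : Type) (g : K1 -> seq (rat * K3)) (l : seq (rat * K1)) :=
  flatten [seq cscale p.1 (g p.2) | p <- l].
Definition cbilin (K1 K2 K3 : Type) (g : K1 -> K2 -> seq (rat * K3)) l l' :=
  clin (fun w => clin (g w) l') l.

Section IM.
Variable K : choiceType.
Implicit Types l : seq (rat * K).

Lemma iM_nil : iM ([::] : seq (rat * K)) = 0.
Proof. by rewrite /iM big_nil. Qed.
Lemma iM_cat l1 l2 : iM (l1 ++ l2) = iM l1 + iM l2.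
Proof. by rewrite /iM big_cat. Qed.
Lemma iM1 (w : K) : iM [:: (1, w)] = << w >>.
Proof. by rewrite /iM big_seq1; cbn [fst snd]; rewrite ratr1_k. Qed.
Lemma iM1c c (w : K) : iM [:: (c, w)] = << ratr c *g w >>.
Proof. by rewrite /iM big_seq1. Qed.
Lemma scaleU c x (w : K) : c *: << x *g w >> = << c * x *g w >> :> {malg k[K]}.
Proof. by apply/malgP => w'; rewrite mcoeffZ !mcoeffU mulrnAr. Qed.
Lemma iM_scale c l : iM (cscale c l) = ratr c *: iM l.
Proof.
rewrite /iM /cscale big_map scaler_sumr; apply: eq_bigr => p _.
by rewrite scaleU (ratrM_k hk).
Qed.
Lemma iM_neg l : iM (cneg l) = - iM l.
Proof. by rewrite /cneg iM_scale (ratrN_k hk) ratr1_k scaleN1r. Qed.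
Lemma iM_cons p l : iM (p :: l) = << ratr p.1 *g p.2 >> + iM l.
Proof. by rewrite /iM big_cons. Qed.
End IM.

Lemma lin_iM (K1 K3 : choiceType) (f : K1 -> {malg k[K3]}) l :
  lin f (iM l) = \sum_(p <- l) ratr p.1 *: f p.2.
Proof. by rewrite /iM lin_sum; apply: eq_bigr => p _; rewrite linU. Qed.

Lemma clinE (K1 K3 : choiceType) (f : K1 -> {malg k[K3]}) g l :
  (forall w, f w = iM (g w)) -> lin f (iM l) = iM (clin g l).
Proof.
move=> fg; rewrite lin_iM /clin; elim: l => [|p l IH]; first by rewrite big_nil iM_nil.
by rewrite big_cons /= iM_cat IH iM_scale fg.
Qed.

Lemma cbilinE (K1 K2 K3 : choiceType) (f : K1 -> K2 -> {malg k[K3]}) g l l' :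
  (forall w w', f w w' = iM (g w w')) -> bilin f (iM l) (iM l') = iM (cbilin g l l').
Proof.
move=> fg; rewrite bilinE /cbilin; apply: clinE => w; exact: clinE.
Qed.

End Lin.

Section Conc.
Variable k : fieldType.
Hypothesis hk : [pchar k] =i pred0.
Notation iM := (iM k).
Notation rN := (ratrN_k hk).
Notation rM := (ratrM_k hk).
Notation rD := (ratrD_k hk).

Definition cwmul (w w' : Word) : seq (rat * Word) :=
  let: (i, n0, l, j) := w in
  let: (i', n0', l', j') := w' in
  if j != i' then [::] else
  let p := lastL i l in
  let q := firstR l' j' in
  let base (d : int) : seq (rat * Word) :=
    let: (m0, ml) := shiftlast n0 l (n0' + d) in [:: (1, (i, m0, ml ++ l', j'))] in
  if (p == q) && (p != j) then base 1 ++ cneg (base 0) else base 0.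

Lemma wmulE w w' : wmul k w w' = iM (cwmul w w').
Proof.
move: w w' => [[[i n0] l] j] [[[i' n0'] l'] j']; rewrite /wmul /cwmul.
case: (j != i'); first by rewrite iM_nil.
case: ifP => _.
  rewrite iM_cat (iM_neg hk).
  by case: (shiftlast n0 l (n0' + 1)) => ? ?; case: (shiftlast n0 l (n0' + 0)) => ? ?;
     rewrite !iM1.
by case: (shiftlast n0 l (n0' + 0)) => ? ?; rewrite !iM1.
Qed.

Definition cdmul := cbilin cwmul.
Lemma dmul_iM l l' : dmul (iM l) (iM l') = iM (cdmul l l').
Proof. by apply: (cbilinE hk) => w w'; rewrite wmulE. Qed.

Definition ctens (l l' : seq (rat * Word)) : seq (rat * (Word * Word)) :=
  cbilin (fun w w' => [:: (1, (w, w'))]) l l'.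
Lemma tens_iM l l' : tens (iM l) (iM l') = iM (ctens l l').
Proof. by apply: (cbilinE hk) => w w'; rewrite iM1. Qed.

Definition comulL (ly : seq (rat * Word)) (lt : seq (rat * (Word * Word))) :=
  clin (fun ww => ctens (cdmul ly [:: (1, ww.1)]) [:: (1, ww.2)]) lt.
Lemma omulL_iM ly lt : omulL (iM ly) (iM lt) = iM (comulL ly lt).
Proof. by apply: (clinE hk) => ww; rewrite -!iM1 dmul_iM tens_iM. Qed.

Definition comulR (lt : seq (rat * (Word * Word))) (lz : seq (rat * Word)) :=
  clin (fun ww => ctens [:: (1, ww.1)] (cdmul [:: (1, ww.2)] lz)) lt.
Lemma omulR_iM lt lz : omulR (iM lt) (iM lz) = iM (comulR lt lz).
Proof. by apply: (clinE hk) => ww; rewrite -!iM1 dmul_iM tens_iM. Qed.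

Definition cmult (lt : seq (rat * (Word * Word))) := clin (fun ww => cwmul ww.1 ww.2) lt.
Lemma mult_iM lt : mult (iM lt) = iM (cmult lt).
Proof. by apply: (clinE hk) => ww; rewrite wmulE. Qed.

Definition csg (z : int) : rat := if odd `|z|%N then -1 else 1.
Lemma sgnzE z : sgnz k z = ratr (csg z).
Proof.
rewrite /sgnz /csg -signr_odd; case: (odd _); rewrite ?expr1 ?expr0 ?rN ratr1_k //.
Qed.

Definition csigma12 (lt : seq (rat * (Word * Word))) :=
  clin (fun ww => [:: (csg ((deg ww.1)%:Z * (deg ww.2)%:Z), (ww.2, ww.1))]) lt.
Lemma sigma12_iM lt : sigma12 (iM lt) = iM (csigma12 lt).
Proof. by apply: (clinE hk) => ww; rewrite sgnzE scaleU mulr1 iM1c. Qed.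

Lemma iM_scaleE c (l : seq (rat * Word)) : ratr c *: iM l = iM (cscale c l).
Proof. by rewrite (iM_scale hk). Qed.
Lemma iM_scaleE2 c (l : seq (rat * (Word * Word))) : ratr c *: iM l = iM (cscale c l).
Proof. by rewrite (iM_scale hk). Qed.

Definition csum (K : eqType) (w : K) (l : seq (rat * K)) : rat :=
  foldr (fun p acc => if p.2 == w then p.1 + acc else acc) 0 l.
Definition czero (K : eqType) (l : seq (rat * K)) : bool :=
  all (fun w => csum w l == 0) (map snd l).

Lemma mcoeff_iM (K : choiceType) (l : seq (rat * K)) w : (iM l)@_w = ratr (csum w l).
Proof.
elim: l => [|p l IH]; first by rewrite iM_nil mcoeff0 ratr0_k.
rewrite iM_cons mcoeffD IH mcoeffU /=; case: (p.2 == w); rewrite ?rD //.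
by rewrite add0r.
Qed.

Lemma csum_supp (K : eqType) (l : seq (rat * K)) w : csum w l != 0 -> w \in map snd l.
Proof.
rewrite /csum; elim: l => [|p l IH] //=.
rewrite in_cons (eq_sym w); case: (p.2 == w) => //= /IH ->; by rewrite orbT.
Qed.

Lemma czeroP (K : choiceType) (l : seq (rat * K)) : czero l -> iM l = 0.
Proof.
move=> /allP h; apply/malgP => w; rewrite mcoeff_iM mcoeff0.
have [->|/csum_supp /h /eqP ->] := eqVneq (csum w l) 0; exact: ratr0_k.
Qed.

Lemma iM_eq (K : choiceType) (l1 l2 : seq (rat * K)) :
  czero (l1 ++ cneg l2) -> iM l1 = iM l2.
Proof. by move/czeroP; rewrite iM_cat (iM_neg hk) => /eqP; rewrite subr_eq0 => /eqP. Qed.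

End Conc.

Section Ev.
Variable k : fieldType.
Hypothesis hk : [pchar k] =i pred0.
Notation iM := (iM k).
Notation iM1 := (@iM1 k _).

Definition wA : Word := (v1, 0%:Z, [::], v2).
Definition wAs : Word := (v2, 0%:Z, [::], v1).
Definition we (i : vtx) : Word := (i, 0%:Z, [::], i).
Definition ws (i : vtx) (n : int) : Word := (i, n, [::], i).

Definition cthetab (c : bool) (p q : vtx) : seq (rat * (Word * Word)) :=
  if (p == v1) && (q == v2) then (if c then [::] else ctens [:: (1, we v1)] [:: (1, we v2)])
  else if (p == v2) && (q == v1) then (if c then ctens [:: (1, we v2)] [:: (1, we v1)] else [::])
  else [::].
Lemma thetabE c p q : thetab k c p q = iM (cthetab c p q).
Proof.
rewrite /thetab /cthetab /e.
case: ifP => _; first by case: c; rewrite ?iM_nil // -!iM1 (tens_iM hk).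
case: ifP => _; last by rewrite iM_nil.
by case: c; rewrite ?iM_nil // -!iM1 (tens_iM hk).
Qed.

Definition cthetas (c : bool) (p : vtx) :=
  if p == v1 then comulR (cthetab c v1 v2) [:: (1, wAs)] ++ comulL [:: (1, wA)] (cthetab c v2 v1)
  else comulR (cthetab c v2 v1) [:: (1, wA)] ++ comulL [:: (1, wAs)] (cthetab c v1 v2).
Lemma thetasE c p : thetas k c p = iM (cthetas c p).
Proof.
rewrite /thetas /cthetas /arA /arAs; case: ifP => _;
by rewrite iM_cat !thetabE -!iM1 (omulR_iM hk) (omulL_iM hk).
Qed.

Lemma sum_iM (s : seq nat) (G : nat -> seq (rat * (Word * Word))) :
  \sum_(i <- s) iM (G i) = iM (flatten [seq G i | i <- s]).
Proof.
elim: s => [|a s IH]; first by rewrite big_nil iM_nil.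
by rewrite big_cons /= iM_cat IH.
Qed.

Definition cthetapow (c : bool) (p : vtx) (n : int) :=
  match n with
  | Posz m => flatten [seq comulR (comulL [:: (1, ws p i%:Z)] (cthetas c p))
                                  [:: (1, ws p (m%:Z - 1 - i%:Z))] | i <- iota 0 m]
  | Negz m => cneg (flatten [seq comulR (comulL [:: (1, ws p (- (i%:Z + 1)))] (cthetas c p))
                                  [:: (1, ws p (- (m.+1%:Z - i%:Z)))] | i <- iota 0 m.+1])
  end.
Lemma thetapowE c p n : thetapow k c p n = iM (cthetapow c p n).
Proof.
rewrite /thetapow /cthetapow /spow; case: n => m.
  rewrite -sum_iM.
  have -> : iota 0 m = index_iota 0 m by rewrite /index_iota subn0.
  rewrite big_mkord.
  by apply: eq_bigr => i _; rewrite thetasE -!iM1 (omulL_iM hk) (omulR_iM hk).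
rewrite (iM_neg hk); congr (- _).
rewrite -sum_iM.
have -> : iota 0 m.+1 = index_iota 0 m.+1 by rewrite /index_iota subn0.
rewrite big_mkord.
by apply: eq_bigr => i _; rewrite thetasE -!iM1 (omulL_iM hk) (omulR_iM hk).
Qed.

Definition cthetaw (c : bool) (w : Word) :=
  let: (p, n, l, q) := w in
  if l is [::] then
    comulR (cthetapow c p n) [:: (1, (p, 0%:Z, [::], q))] ++ comulL [:: (1, ws p n)] (cthetab c p q)
  else [::].
Lemma thetawE c w : thetaw k c w = iM (cthetaw c w).
Proof.
move: w => [[[p n] [|? ?]] q]; rewrite /thetaw /cthetaw ?iM_nil //.
by rewrite iM_cat thetapowE thetabE /spow -!iM1 (omulL_iM hk) (omulR_iM hk).
Qed.

Definition cevw (w x : Word) :=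
  let: (i0, n0, l, j1) := w in
  if l is [:: (c, n1)] then
    clin (fun ww => ctens (cdmul [:: (1, ww.1)] [:: (1, (thR c, n1, [::], j1))])
                          (cdmul [:: (1, (i0, n0, [::], thL c))] [:: (1, ww.2)])) (cthetaw c x)
  else [::].
Lemma evwE w x : evw k w x = iM (cevw w x).
Proof.
move: w => [[[i0 n0] [|[c n1] [|? ?]]] j1]; rewrite /evw /cevw ?iM_nil //.
rewrite thetawE; apply: (clinE hk) => ww.
by rewrite -!iM1 !(dmul_iM hk) (tens_iM hk).
Qed.

Lemma ev_iM l l' : ev (iM l) (iM l') = iM (cbilin cevw l l').
Proof. by apply: (cbilinE hk) => w w'; rewrite evwE. Qed.

End Ev.

Inductive atom := aA | aAs | adA | adAs | ae1 | as2.
Definition aval (x : atom) : Word :=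
  match x with
  | aA => (v1, 0%:Z, [::], v2)
  | aAs => (v2, 0%:Z, [::], v1)
  | adA => (v2, 0%:Z, [:: (false, 0%:Z)], v1)
  | adAs => (v1, 0%:Z, [:: (true, 0%:Z)], v2)
  | ae1 => (v1, 0%:Z, [::], v1)
  | as2 => (v2, -1, [::], v2)
  end.
Definition degA x := deg (aval x).
Definition degs x xs := (degA x + sumn (map degA xs))%N.

Fixpoint cprod (x : atom) (xs : seq atom) : seq (rat * Word) :=
  match xs with [::] => [:: (1, aval x)] | y :: ys => cdmul [:: (1, aval x)] (cprod y ys) end.

Definition cbase (x y : atom) : seq (rat * (Word * Word)) :=
  match degA x, degA y with
  | S O, O => cbilin cevw [:: (1, aval x)] [:: (1, aval y)]
  | O, S O => cneg (csigma12 (cbilin cevw [:: (1, aval y)] [:: (1, aval x)]))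
  | _, _ => [::]
  end.

Fixpoint cbr1 (a : atom) (y : atom) (ys : seq atom) :=
  match ys with
  | [::] => cbase a y
  | z :: zs => cscale (csg (((degA a)%:Z - 1) * (degA y)%:Z)) (comulL [:: (1, aval y)] (cbr1 a z zs))
               ++ comulR (cbase a y) (cprod z zs)
  end.
Definition cbrn x xs y :=
  cneg (cscale (csg (((degs x xs)%:Z - 1) * ((degA y)%:Z - 1))) (csigma12 (cbr1 y x xs))).
Fixpoint cbr x xs y ys :=
  match ys with
  | [::] => cbrn x xs y
  | z :: zs => cscale (csg (((degs x xs)%:Z - 1) * (degA y)%:Z)) (comulL [:: (1, aval y)] (cbr x xs z zs))
               ++ comulR (cbrn x xs y) (cprod z zs)
  end.

Lemma shiftlast_size n0 (l : seq (bool * int)) d : size (shiftlast n0 l d).2 = size l.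
Proof.
rewrite /shiftlast; case E: (rev l) => [|[c n] r] /=.
  by rewrite -(revK l) E.
by rewrite size_rcons size_rev -(size_rev l) E.
Qed.

Lemma all_cscale (K : Type) (Q : K -> bool) c l :
  all (fun q => Q q.2) (cscale c l) = all (fun q => Q q.2) l.
Proof. by rewrite /cscale all_map. Qed.

Lemma all_clin (K1 K3 : eqType) (Q : K3 -> bool) (g : K1 -> seq (rat * K3)) (l : seq (rat * K1)) :
  (forall p, p \in l -> all (fun q => Q q.2) (g p.2)) -> all (fun q => Q q.2) (clin g l).
Proof.
elim: l => [|p l IH] h //=; rewrite all_cat all_cscale h ?mem_head //=.
by apply: IH => p' hp'; apply: h; rewrite in_cons hp' orbT.
Qed.

Lemma cwmul_deg w w' : all (fun q => deg q.2 == (deg w + deg w')%N) (cwmul w w').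
Proof.
move: w w' => [[[i n0] l] j] [[[i' n0'] l'] j']; rewrite /cwmul /deg /=.
case: (j != i') => //=.
have h d : all (fun q => size q.2.1.2 == (size l + size l')%N)
  (let: (m0, ml) := shiftlast n0 l (n0' + d) in [:: (1, (i, m0, ml ++ l', j'))]).
  by have := shiftlast_size n0 l (n0' + d); case: shiftlast => m0 ml /= hs; rewrite size_cat hs eqxx.
by case: ifP => _; rewrite ?all_cat ?(all_cscale (fun w : Word => size w.1.2 == _)) ?h.
Qed.

Lemma cdmul_deg a b l l' : all (fun q => deg q.2 == a) l -> all (fun q => deg q.2 == b) l' ->
  all (fun q => deg q.2 == (a + b)%N) (cdmul l l').
Proof.
move=> /allP hl /allP hl'.
apply: (all_clin (Q := fun w : Word => deg w == (a + b)%N)) => p /hl /eqP hp.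
apply: (all_clin (Q := fun w : Word => deg w == (a + b)%N)) => p' /hl' /eqP hp'.
by rewrite -hp -hp'; apply: cwmul_deg.
Qed.

Lemma cprod_deg x xs : all (fun q => deg q.2 == degs x xs) (cprod x xs).
Proof.
rewrite /degs; elim: xs x => [|y ys IH] x /=; first by rewrite addn0 eqxx.
by apply: cdmul_deg; rewrite /= ?eqxx //; apply: IH.
Qed.

Section Br.
Variable k : fieldType.
Hypothesis hk : [pchar k] =i pred0.
Notation iM := (iM k).
Notation iM1 := (@iM1 k _).
Variable br : D k -> D k -> T2 k.
Hypothesis hbr : double_schouten br.

Lemma homog_iM n (l : seq (rat * Word)) : all (fun p => deg p.2 == n) l -> homog n (iM l).
Proof.
move=> /allP h w; rewrite (mcoeff_iM hk).
have [->|] := eqVneq (csum w l) 0; first by rewrite ratr0_k eqxx.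
by move=> /csum_supp /mapP [p /h /eqP hp ->] _.
Qed.

Fixpoint prodA (x : atom) (xs : seq atom) : D k :=
  match xs with [::] => << aval x >> | y :: ys => dmul << aval x >> (prodA y ys) end.

Lemma prodAE x xs : prodA x xs = iM (cprod x xs).
Proof.
elim: xs x => [|y ys IH] x /=; first by rewrite iM1.
by rewrite IH -iM1 (dmul_iM hk).
Qed.

Lemma homog_prodA x xs : homog (degs x xs) (prodA x xs).
Proof. by rewrite prodAE; apply: homog_iM; apply: cprod_deg. Qed.

Lemma homog_atom x : homog (degA x) (<< aval x >> : D k).
Proof. by rewrite -iM1; apply: homog_iM; rewrite /= eqxx. Qed.

Lemma br0l z : br 0 z = 0.
Proof.
case: hbr => [[hlin _ _ _ _] _ _ _].
have := (hlin 1 0 0 z).1; rewrite !scale1r !addr0 => /(congr1 (fun t => t - br 0 z)).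
by rewrite addrK subrr => <-.
Qed.
Lemma br0r z : br z 0 = 0.
Proof.
case: hbr => [[hlin _ _ _ _] _ _ _].
have := (hlin 1 z 0 0).2; rewrite !scale1r !addr0 => /(congr1 (fun t => t - br z 0)).
by rewrite addrK subrr => <-.
Qed.
Lemma brDl x y z : br (x + y) z = br x z + br y z.
Proof. by case: hbr => [[hlin _ _ _ _] _ _ _]; have := (hlin 1 x y z).1; rewrite !scale1r. Qed.
Lemma brDr x y z : br z (x + y) = br z x + br z y.
Proof. by case: hbr => [[hlin _ _ _ _] _ _ _]; have := (hlin 1 z x y).2; rewrite !scale1r. Qed.
Lemma brZl c x z : br (c *: x) z = c *: br x z.
Proof. by case: hbr => [[hlin _ _ _ _] _ _ _]; have := (hlin c x 0 z).1; rewrite !addr0 br0l addr0. Qed.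
Lemma brZr c x z : br z (c *: x) = c *: br z x.
Proof. by case: hbr => [[hlin _ _ _ _] _ _ _]; have := (hlin c z x 0).2; rewrite !addr0 br0r addr0. Qed.
Lemma brNl x z : br (- x) z = - br x z.
Proof. by rewrite -scaleN1r brZl scaleN1r. Qed.
Lemma brNr x z : br z (- x) = - br z x.
Proof. by rewrite -scaleN1r brZr scaleN1r. Qed.

End Br.

Ltac reify hk :=
  rewrite -?iM1;
  repeat first [ rewrite (dmul_iM hk) | rewrite (tens_iM hk) | rewrite (omulL_iM hk)
               | rewrite (omulR_iM hk) | rewrite (mult_iM hk) | rewrite (sigma12_iM hk)
               | rewrite (ev_iM hk) | rewrite (sgnzE hk) | rewrite (iM_scaleE hk)
               | rewrite (iM_scaleE2 hk) | rewrite -iM_cat | rewrite -(iM_neg hk) ].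

Lemma degA01 x : degA x = 0%N \/ degA x = 1%N.
Proof. by case: x; [left|left|right|right|left|left]. Qed.

Section Br2.
Variable k : fieldType.
Hypothesis hk : [pchar k] =i pred0.
Notation iM := (iM k).
Variable br : D k -> D k -> T2 k.
Hypothesis hbr : double_schouten br.

Lemma base_ok x y : br << aval x >> << aval y >> = iM (cbase x y).
Proof.
case: hbr => [[_ _ _ hanti _] h00 hev [hAA hAAs hAsA hAsAs]].
have hx0 := @homog_atom _ hk x; have hy0 := @homog_atom _ hk y.
have [hx|hx] := degA01 x; have [hy|hy] := degA01 y; rewrite /cbase hx hy.
- by rewrite iM_nil; apply: h00; [move: hx0; rewrite hx | move: hy0; rewrite hy].
- rewrite (hanti _ _ _ _ hx0 hy0) (hev _ _ _ _); [|by move: hy0; rewrite hy|by move: hx0; rewrite hx].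
  rewrite hx hy.
  have -> : sgnz k ((0%:Z - 1) * (1%:Z - 1)) = 1 by rewrite /sgnz.
  by rewrite scale1r; reify hk.
- rewrite (hev _ _ _ _); [|by move: hx0; rewrite hx|by move: hy0; rewrite hy].
  by reify hk.
- rewrite iM_nil; case: x hx hx0 => [h _|h _|_ _|_ _|h _|h _]; try discriminate h;
    case: y hy hy0 => [h _|h _|_ _|_ _|h _|h _]; try discriminate h.
  + exact: hAA.
  + exact: hAAs.
  + exact: hAsA.
  + exact: hAsAs.
Qed.

Lemma br1_ok a y ys : br << aval a >> (prodA k y ys) = iM (cbr1 a y ys).
Proof.
case: hbr => [[_ _ hleib _ _] _ _ _].
elim: ys y => [|z zs IH] y; first exact: base_ok.
rewrite [prodA _ _ _]/=.
rewrite (hleib _ _ _ _ _ (@homog_atom _ hk a) (@homog_atom _ hk y)) IH base_ok (prodAE hk).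
by reify hk; exact: congr1.
Qed.

Lemma brn_ok x xs y : br (prodA k x xs) << aval y >> = iM (cbrn x xs y).
Proof.
case: hbr => [[_ _ _ hanti _] _ _ _].
rewrite (hanti _ _ _ _ (@homog_prodA _ hk x xs) (@homog_atom _ hk y)).
rewrite br1_ok.
by reify hk; exact: congr1.
Qed.

Lemma br_ok x xs y ys : br (prodA k x xs) (prodA k y ys) = iM (cbr x xs y ys).
Proof.
case: hbr => [[_ _ hleib _ _] _ _ _].
elim: ys y => [|z zs IH] y; first exact: brn_ok.
rewrite [prodA _ y _]/=.
rewrite (hleib _ _ _ _ _ (@homog_prodA _ hk x xs) (@homog_atom _ hk y)) IH brn_ok (prodAE hk).
by reify hk; exact: congr1.
Qed.

End Br2.

Section Inj.
Variable k : fieldType.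
Hypothesis hk : [pchar k] =i pred0.
Notation iM := (iM k).

Lemma lin_ext (K1 K3 : choiceType) (f g : K1 -> {malg k[K3]}) x :
  f =1 g -> lin f x = lin g x.
Proof. by move=> fg; rewrite /lin; apply: eq_bigr => w _; rewrite fg. Qed.

Lemma mcoeff_lin (K1 K3 : choiceType) (f : K1 -> {malg k[K3]}) x key :
  (lin f x)@_key = \sum_(w <- msupp x) x@_w * (f w)@_key.
Proof. by rewrite /lin raddf_sum; apply: eq_bigr => w _; apply: mcoeffZ. Qed.

Lemma evU (X : D k) (w : Word) : ev X << w >> = lin (fun w' => evw k w' w) X.
Proof. by rewrite /ev bilinE; apply: lin_ext => w'; rewrite linU scale1r. Qed.

Lemma dmulU (w w' : Word) : dmul (<< w >> : D k) << w' >> = wmul k w w'.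
Proof. by rewrite /dmul bilinE linU scale1r linU scale1r. Qed.
Lemma tensU (w w' : Word) : tens (<< w >> : D k) << w' >> = << (w, w') >>.
Proof. by rewrite /tens bilinE linU scale1r linU scale1r. Qed.

Definition wc (c : bool) : Word := if c then wAs else wA.
Definition keyc (c : bool) (w : Word) : Word * Word :=
  let: (i0, n0, l, j1) := w in
  let n1 := (head (false, 0%:Z) l).2 in
  if c then ((v2, n1, [::], j1), (i0, n0, [::], v1)) else ((v1, n1, [::], j1), (i0, n0, [::], v2)).

Lemma evw_c c (w : Word) : deg w = 1%N ->
  evw k w (wc c) = if (head (false, 0%:Z) w.1.2).1 == c then << keyc c w >> else 0.
Proof.
move: w => [[[i0 n0] [|[cp n1] [|? ?]]] j1] //= _.
rewrite /evw thetawE //.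
case: c; case: cp.
- have -> : cthetaw true (wc true) = [:: (1, (we v2, we v1))] by vm_compute.
  rewrite iM1 linU scale1r /= !dmulU.
  by case: i0; case: j1; rewrite /wmul /= ?addr0 ?add0r tensU.
- change (cthetaw false (wc true)) with (@nil (rat * (Word * Word))).
  by rewrite iM_nil lin0.
- change (cthetaw true (wc false)) with (@nil (rat * (Word * Word))).
  by rewrite iM_nil lin0.
- have -> : cthetaw false (wc false) = [:: (1, (we v1, we v2))] by vm_compute.
  rewrite iM1 linU scale1r /= !dmulU.
  by case: i0; case: j1; rewrite /wmul /= ?addr0 ?add0r tensU.
Qed.


Lemma keyc_inj c (w w' : Word) : deg w = 1%N -> deg w' = 1%N ->
  (head (false, 0%:Z) w.1.2).1 = c -> (head (false, 0%:Z) w'.1.2).1 = c ->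
  keyc c w = keyc c w' -> w = w'.
Proof.
move: w w' => [[[i0 n0] [|[c0 n1] [|? ?]]] j1] [[[i0' n0'] [|[c0' n1'] [|? ?]]] j1'] //= _ _ <- <-.
by case: c0 c0' => -[] //= [-> -> -> ->].
Qed.

Lemma ev_inj (X : D k) : homog 1 X -> ev X << wA >> = 0 -> ev X << wAs >> = 0 -> X = 0.
Proof.
move=> hX hA hAs; apply/malgP => w; rewrite mcoeff0.
apply/eqP; apply/negPn/negP => nz.
have dw := hX w nz.
have hc : forall c', ev X << wc c' >> = 0 by case; [exact: hAs | exact: hA].
pose c := (head (false, 0%:Z) w.1.2).1.
move: (congr1 (mcoeff (keyc c w)) (hc c)); rewrite evU mcoeff_lin mcoeff0.
have win : w \in msupp X by rewrite -mcoeff_neq0.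
rewrite (bigD1_seq w) ?fset_uniq //= big1_seq ?addr0.
  by rewrite evw_c // eqxx mcoeffUU mulr1 => /eqP; rewrite (negbTE nz).
move=> w' /andP [ne hin]; have nz' : X@_w' != 0 by rewrite mcoeff_neq0.
have dw' := hX w' nz'.
rewrite evw_c //; case: eqP => hc'; last by rewrite mcoeff0 mulr0.
rewrite mcoeffU; case: eqP => hkk; last by rewrite mulr0.
by move: ne; rewrite (keyc_inj dw' dw hc' erefl hkk) eqxx.
Qed.

End Inj.

Section Main.
Variable k : fieldType.
Hypothesis hk : [pchar k] =i pred0.
Notation iM := (iM k).

Lemma homogB n (x y : D k) : homog n x -> homog n y -> homog n (x - y).
Proof.
move=> hx hy w; rewrite mcoeffB.
have [/hx //|/negbNE/eqP x0] := boolP (x@_w != 0).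
by rewrite x0 sub0r oppr_eq0 => /hy.
Qed.

Lemma evB (x y z : D k) : ev (x - y) z = ev x z - ev y z.
Proof. by rewrite /ev !bilinE linD linN. Qed.

Definition lE (c : bool) : seq (rat * Word) :=
  if c then cdmul [:: (1, aval adA)] [:: (1, aval aA)] ++ cneg (cdmul [:: (1, aval aAs)] [:: (1, aval adAs)])
  else cdmul [:: (1, aval adAs)] [:: (1, aval aAs)] ++ cneg (cdmul [:: (1, aval aA)] [:: (1, aval adA)]).

Lemma homog0U (w : Word) : deg w = 0%N -> homog 0 (<< w >> : D k).
Proof. move=> dw w'; rewrite mcoeffU; case: (w =P w') => [<- _|_]; [exact: dw | by rewrite mulr0n eqxx]. Qed.

Lemma E_id (c : bool) (E : D k) : is_E c E -> E = iM (lE c).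
Proof.
move=> [hE evE]; apply/eqP; rewrite -subr_eq0; apply/eqP; apply: (ev_inj hk).
- apply: (homogB hE); apply: (homog_iM hk); by clear evE; case: c; vm_compute.
- rewrite evB (evE _ (@homog0U wA erefl)) /e; reify hk.
  apply: (czeroP hk).
  by clear evE; case: c; vm_compute.
- rewrite evB (evE _ (@homog0U wAs erefl)) /e; reify hk.
  apply: (czeroP hk).
  by clear evE; case: c; vm_compute.
Qed.

End Main.
Section BrLin.
Variable k : fieldType.
Variable br : D k -> D k -> T2 k.
Hypothesis hbr : double_schouten br.
Lemma br_P1 (A B C Z : D k) a b :
  br (A + a *: B + b *: C) Z = br A Z + a *: br B Z + b *: br C Z.
Proof.
rewrite (brDl hbr (A + a *: B) (b *: C) Z) (brDl hbr A (a *: B) Z).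
by congr (_ + _ + _); apply: (brZl hbr).
Qed.
Lemma br_R (X A B C : D k) a b :
  br X (A + a *: B + b *: C) = br X A + a *: br X B + b *: br X C.
Proof.
rewrite (brDr hbr (A + a *: B) (b *: C) X) (brDr hbr A (a *: B) X).
by congr (_ + _ + _); apply: (brZr hbr).
Qed.
Lemma br_P2 (A B C Z1 Z2 : D k) a b :
  br (A + a *: B + b *: C) (Z1 + Z2) =
  (br A Z1 + a *: br B Z1 + b *: br C Z1) + (br A Z2 + a *: br B Z2 + b *: br C Z2).
Proof.
rewrite (brDr hbr Z1 Z2 (A + a *: B + b *: C)).
by congr (_ + _); apply: br_P1.
Qed.
Lemma br_PP (A B C : D k) a b :
  br (A + a *: B + b *: C) (A + a *: B + b *: C) =
  (br A A + a *: br A B + b *: br A C) + a *: (br B A + a *: br B B + b *: br B C)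
  + b *: (br C A + a *: br C B + b *: br C C).
Proof.
exact: (etrans (br_P1 A B C _ a b) (congr2 (fun x y => x + y)
  (congr2 (fun x y => x + y) (br_R A A B C a b) (congr1 (fun x => a *: x) (br_R B A B C a b)))
  (congr1 (fun x => b *: x) (br_R C A B C a b)))).
Qed.

Lemma P1_eval (X Y Z W : D k) a b (t1 t2 t3 : T2 k) :
  br X W = t1 -> br Y W = t2 -> br Z W = t3 ->
  br (X + a *: Y + b *: Z) W = t1 + a *: t2 + b *: t3.
Proof. by move=> h1 h2 h3; rewrite br_P1 h1 h2 h3. Qed.

Lemma P2_eval (X Y Z W1 W2 : D k) a b (t1 t2 t3 u1 u2 u3 : T2 k) :
  br X W1 = t1 -> br Y W1 = t2 -> br Z W1 = t3 ->
  br X W2 = u1 -> br Y W2 = u2 -> br Z W2 = u3 ->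
  br (X + a *: Y + b *: Z) (W1 + W2) = (t1 + a *: t2 + b *: t3) + (u1 + a *: u2 + b *: u3).
Proof. by move=> h1 h2 h3 h4 h5 h6; rewrite br_P2 h1 h2 h3 h4 h5 h6. Qed.

Lemma PP_eval (X Y Z : D k) a b (t11 t12 t13 t21 t22 t23 t31 t32 t33 : T2 k) :
  br X X = t11 -> br X Y = t12 -> br X Z = t13 ->
  br Y X = t21 -> br Y Y = t22 -> br Y Z = t23 ->
  br Z X = t31 -> br Z Y = t32 -> br Z Z = t33 ->
  br (X + a *: Y + b *: Z) (X + a *: Y + b *: Z) =
  (t11 + a *: t12 + b *: t13) + a *: (t21 + a *: t22 + b *: t23) + b *: (t31 + a *: t32 + b *: t33).
Proof. by move=> h11 h12 h13 h21 h22 h23 h31 h32 h33; rewrite br_PP h11 h12 h13 h21 h22 h23 h31 h32 h33. Qed.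
End BrLin.

Section Main2.
Variable k : fieldType.
Hypothesis hk : [pchar k] =i pred0.
Notation iM := (iM k).
Variable br : D k -> D k -> T2 k.
Hypothesis hbr : double_schouten br.

Lemma onehalfE : onehalf k = ratr (2%:R^-1 : rat).
Proof. by rewrite /onehalf (ratrV_k hk) ratr_nat_k. Qed.

Lemma hP : Pbiv k = prodA k adA [:: adAs] + ratr (2%:R^-1 : rat) *: prodA k aA [:: adA; adAs; aAs]
  + ratr (- (2%:R^-1 : rat)) *: prodA k aAs [:: adAs; adA; aA].
Proof.
rewrite /Pbiv onehalfE /dA /dAs /arA /arAs !(prodAE hk); reify hk.
by apply: (iM_eq hk); vm_compute.
Qed.

Lemma part3 (E2 : D k) (hE2 : is_E v2 E2) :
  mult (br (Pbiv k) (Phi2 k)) = - (onehalf k *: (dmul E2 (Phi2 k) + dmul (Phi2 k) E2)).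
Proof.
have hE := E_id hk hE2; subst E2.
rewrite hP.
rewrite (_ : Phi2 k = prodA k as2 [::]) //.
rewrite (P1_eval hbr _ _ (br_ok hk hbr _ _ _ _) (br_ok hk hbr _ _ _ _) (br_ok hk hbr _ _ _ _)).
rewrite /Phi2 /spow onehalfE !(prodAE hk).
reify hk.
apply: (iM_eq hk).
vm_compute.
done.
Qed.

Lemma part2 (E1 : D k) (hE1 : is_E v1 E1) :
  mult (br (Pbiv k) (Phi1 k)) = - (onehalf k *: (dmul E1 (Phi1 k) + dmul (Phi1 k) E1)).
Proof.
have hE := E_id hk hE1; subst E1.
rewrite hP (_ : Phi1 k = prodA k ae1 [::] + prodA k aA [:: aAs]); last first.
  by rewrite /Phi1 /e /arA /arAs.
rewrite (P2_eval hbr _ _ (br_ok hk hbr _ _ _ _) (br_ok hk hbr _ _ _ _) (br_ok hk hbr _ _ _ _)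
   (br_ok hk hbr _ _ _ _) (br_ok hk hbr _ _ _ _) (br_ok hk hbr _ _ _ _)).
rewrite onehalfE ?(prodAE hk); reify hk.
by apply: (iM_eq hk); vm_compute.
Qed.

Definition cgcomm (pr : (nat * seq (rat * Word)) * (nat * seq (rat * Word))) :=
  cdmul pr.1.2 pr.2.2 ++ cneg (cscale (csg (pr.1.1%:Z * pr.2.1%:Z)) (cdmul pr.2.2 pr.1.2)).

Lemma sum_gcomm (cs0 : seq ((nat * seq (rat * Word)) * (nat * seq (rat * Word)))) :
  \sum_(pr <- cs0) gcomm pr.1.1 pr.2.1 (iM pr.1.2) (iM pr.2.2) = iM (flatten [seq cgcomm pr | pr <- cs0]).
Proof.
elim: cs0 => [|pr cs0 IH]; first by rewrite big_nil iM_nil.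
rewrite big_cons IH /= iM_cat; congr (_ + _).
by rewrite /gcomm /cgcomm !(dmul_iM hk) (sgnzE hk) (iM_scaleE hk) -(iM_neg hk) -iM_cat.
Qed.

Definition cs : seq ((nat * seq (rat * Word)) * (nat * seq (rat * Word))) := [::
  ((0%N, [:: ((fracq ((Posz 5), (Posz 12))), (false, (Posz 0), [:: ], true))]), (3%N, [:: (1, (true, (Posz 0), [:: (false, (Posz 0)); (true, (Posz 0)); (false, (Posz 0))], false))]));
  ((0%N, [:: ((fracq ((Negz 4), (Posz 12))), (false, (Posz 0), [:: ], false))]), (3%N, [:: (1, (false, (Posz 0), [:: (true, (Posz 0)); (false, (Posz 0)); (true, (Posz 0))], false))]));
  ((0%N, [:: ((fracq ((Posz 11), (Posz 12))), (true, (Posz 0), [:: ], false))]), (3%N, [:: (1, (false, (Posz 0), [:: (true, (Posz 0)); (false, (Posz 0)); (true, (Posz 0))], true))]));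
  ((0%N, [:: ((fracq ((Negz 10), (Posz 12))), (true, (Posz 0), [:: ], true))]), (3%N, [:: (1, (true, (Posz 0), [:: (false, (Posz 0)); (true, (Posz 0)); (false, (Posz 0))], true))]));
  ((0%N, [:: ((fracq ((Posz 1), (Posz 3))), (true, (Posz 0), [:: ], true))]), (3%N, [:: (1, (true, (Posz 0), [:: (false, (Posz 0)); (false, (Posz 0)); (true, (Posz 0))], true))]));
  ((0%N, [:: ((fracq ((Negz 0), (Posz 3))), (true, (Posz 0), [:: ], true))]), (3%N, [:: (1, (true, (Posz 0), [:: (false, (Posz 0)); (true, (Posz 0)); (true, (Posz 0))], true))]));
  ((0%N, [:: ((fracq ((Posz 1), (Posz 12))), (false, (Posz 0), [:: ], true))]), (3%N, [:: (1, (true, (Posz 0), [:: (false, (Posz 0)); (true, (Posz 1)); (false, (Posz 0))], false))]));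
  ((0%N, [:: ((fracq ((Posz 1), (Posz 12))), (false, (Posz 0), [:: ], true))]), (3%N, [:: (1, (true, (Posz 0), [:: (false, (Posz 0)); (false, (Posz 0)); (true, (Posz 0))], false))]));
  ((0%N, [:: ((fracq ((Negz 0), (Posz 12))), (false, (Posz 0), [:: ], true))]), (3%N, [:: (1, (true, (Posz 0), [:: (false, (Posz 0)); (true, (Posz 0)); (true, (Posz 0))], false))]));
  ((0%N, [:: ((fracq ((Negz 0), (Posz 12))), (false, (Posz 0), [:: ], false))]), (3%N, [:: (1, (false, (Posz 0), [:: (true, (Posz 1)); (false, (Posz 0)); (true, (Posz 0))], false))]));
  ((0%N, [:: ((fracq ((Posz 1), (Posz 12))), (true, (Posz 0), [:: ], false))]), (3%N, [:: (1, (false, (Posz 0), [:: (true, (Posz 0)); (false, (Posz 1)); (true, (Posz 0))], true))]));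
  ((0%N, [:: ((fracq ((Posz 1), (Posz 12))), (true, (Posz 0), [:: ], false))]), (3%N, [:: (1, (false, (Posz 0), [:: (true, (Posz 0)); (true, (Posz 0)); (false, (Posz 0))], true))]));
  ((0%N, [:: ((fracq ((Negz 0), (Posz 12))), (true, (Posz 0), [:: ], false))]), (3%N, [:: (1, (false, (Posz 0), [:: (true, (Posz 0)); (false, (Posz 0)); (false, (Posz 0))], true))]));
  ((0%N, [:: ((fracq ((Negz 0), (Posz 12))), (true, (Posz 0), [:: ], true))]), (3%N, [:: (1, (true, (Posz 0), [:: (false, (Posz 1)); (true, (Posz 0)); (false, (Posz 0))], true))]));
  ((0%N, [:: ((fracq ((Negz 0), (Posz 6))), (false, (Posz 0), [:: ], false))]), (3%N, [:: (1, (false, (Posz 0), [:: (true, (Posz 0)); (true, (Posz 0)); (true, (Posz 0))], false))]));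
  ((0%N, [:: ((fracq ((Posz 1), (Posz 6))), (false, (Posz 0), [:: ], false))]), (3%N, [:: (1, (false, (Posz 0), [:: (true, (Posz 0)); (true, (Posz 1)); (false, (Posz 0))], false))]));
  ((0%N, [:: ((fracq ((Negz 0), (Posz 6))), (false, (Posz 0), [:: ], false))]), (3%N, [:: (1, (false, (Posz 0), [:: (true, (Posz 0)); (true, (Posz 0)); (false, (Posz 0))], false))]));
  ((0%N, [:: ((fracq ((Negz 0), (Posz 6))), (false, (Posz 0), [:: ], false))]), (3%N, [:: (1, (false, (Posz 0), [:: (true, (Posz 1)); (false, (Posz 0)); (false, (Posz 0))], false))]));
  ((0%N, [:: ((fracq ((Posz 1), (Posz 6))), (false, (Posz 0), [:: ], false))]), (3%N, [:: (1, (false, (Posz 0), [:: (true, (Posz 0)); (false, (Posz 0)); (false, (Posz 0))], false))]));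
  ((0%N, [:: ((fracq ((Posz 1), (Posz 6))), (false, (Posz 0), [:: ], true))]), (3%N, [:: (1, (true, (Posz 0), [:: (false, (Posz 0)); (false, (Posz 0)); (false, (Posz 0))], false))]));
  ((0%N, [:: ((fracq ((Negz 0), (Posz 6))), (true, (Posz 0), [:: ], true))]), (3%N, [:: (1, (true, (Posz 0), [:: (false, (Posz 0)); (false, (Posz 0)); (false, (Posz 0))], true))]));
  ((0%N, [:: ((fracq ((Posz 1), (Posz 6))), (true, (Posz 0), [:: ], true))]), (3%N, [:: (1, (true, (Posz 0), [:: (false, (Posz 0)); (false, (Posz 1)); (true, (Posz 0))], true))]));
  ((0%N, [:: ((fracq ((Negz 0), (Posz 6))), (true, (Posz 0), [:: ], true))]), (3%N, [:: (1, (true, (Posz 0), [:: (false, (Posz 1)); (true, (Posz 0)); (true, (Posz 0))], true))]));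
  ((0%N, [:: ((fracq ((Posz 1), (Posz 6))), (true, (Posz 0), [:: ], false))]), (3%N, [:: (1, (false, (Posz 0), [:: (true, (Posz 0)); (true, (Posz 0)); (true, (Posz 0))], true))]));
  ((1%N, [:: ((fracq ((Negz 0), (Posz 2))), (true, (Posz 0), [:: (false, (Posz 0))], false))]), (2%N, [:: (1, (false, (Posz 0), [:: (true, (Posz 0)); (false, (Posz 0))], true))]));
  ((1%N, [:: ((fracq ((Posz 1), (Posz 2))), (false, (Posz 0), [:: (true, (Posz 0))], true))]), (2%N, [:: (1, (true, (Posz 0), [:: (false, (Posz 0)); (true, (Posz 0))], false))]));
  ((1%N, [:: ((fracq ((Posz 1), (Posz 12))), (true, (Posz 0), [:: (false, (Posz 0))], false))]), (2%N, [:: (1, (false, (Posz 0), [:: (true, (Posz 1)); (false, (Posz 0))], true))]));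
  ((1%N, [:: ((fracq ((Negz 0), (Posz 12))), (false, (Posz 0), [:: (true, (Posz 1))], true))]), (2%N, [:: (1, (true, (Posz 0), [:: (false, (Posz 0)); (true, (Posz 0))], false))]));
  ((1%N, [:: ((fracq ((Posz 1), (Posz 12))), (false, (Posz 0), [:: (true, (Posz 0))], true))]), (2%N, [:: (1, (true, (Posz 0), [:: (false, (Posz 1)); (true, (Posz 0))], false))]));
  ((1%N, [:: ((fracq ((Posz 1), (Posz 12))), (false, (Posz 0), [:: (true, (Posz 0))], false))]), (2%N, [:: (1, (false, (Posz 0), [:: (true, (Posz 0)); (false, (Posz 1))], false))]));
  ((1%N, [:: ((fracq ((Negz 0), (Posz 4))), (false, (Posz 0), [:: (true, (Posz 0))], false))]), (2%N, [:: (1, (false, (Posz 0), [:: (true, (Posz 0)); (false, (Posz 0))], false))]));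
  ((1%N, [:: ((fracq ((Negz 0), (Posz 12))), (false, (Posz 0), [:: (true, (Posz 0))], true))]), (2%N, [:: (1, (true, (Posz 0), [:: (false, (Posz 0)); (false, (Posz 1))], false))]));
  ((1%N, [:: ((fracq ((Negz 0), (Posz 4))), (false, (Posz 0), [:: (true, (Posz 0))], true))]), (2%N, [:: (1, (true, (Posz 0), [:: (false, (Posz 0)); (false, (Posz 0))], false))]));
  ((1%N, [:: ((fracq ((Negz 0), (Posz 12))), (true, (Posz 0), [:: (false, (Posz 1))], false))]), (2%N, [:: (1, (false, (Posz 0), [:: (true, (Posz 0)); (false, (Posz 0))], true))]));
  ((1%N, [:: ((fracq ((Posz 1), (Posz 6))), (false, (Posz 0), [:: (true, (Posz 0))], false))]), (2%N, [:: (1, (false, (Posz 0), [:: (true, (Posz 1)); (false, (Posz 0))], false))]));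
  ((1%N, [:: ((fracq ((Negz 0), (Posz 12))), (false, (Posz 0), [:: (true, (Posz 1))], true))]), (2%N, [:: (1, (true, (Posz 0), [:: (false, (Posz 0)); (false, (Posz 0))], false))]));
  ((1%N, [:: ((fracq ((Posz 1), (Posz 12))), (false, (Posz 0), [:: (true, (Posz 0))], true))]), (2%N, [:: (1, (true, (Posz 0), [:: (false, (Posz 1)); (true, (Posz 0))], false))]));
  ((1%N, [:: ((fracq ((Negz 0), (Posz 4))), (false, (Posz 0), [:: (true, (Posz 0))], true))]), (2%N, [:: (1, (true, (Posz 0), [:: (false, (Posz 0)); (true, (Posz 0))], false))]));
  ((1%N, [:: ((fracq ((Negz 0), (Posz 12))), (false, (Posz 0), [:: (true, (Posz 0))], true))]), (2%N, [:: (1, (true, (Posz 0), [:: (false, (Posz 0)); (false, (Posz 1))], false))]));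
  ((1%N, [:: ((fracq ((Posz 1), (Posz 6))), (false, (Posz 0), [:: (true, (Posz 1))], true))]), (2%N, [:: (1, (true, (Posz 0), [:: (false, (Posz 0)); (true, (Posz 0))], false))]))].


Lemma part1 (E1 E2 : D k) (hE1 : is_E v1 E1) (hE2 : is_E v2 E2) :
      exists s : seq ((nat * D k) * (nat * D k)),
        (forall pr, pr \in s -> homog pr.1.1 pr.1.2 /\ homog pr.2.1 pr.2.2) /\
        mult (br (@Pbiv k) (@Pbiv k))
          - (6%:R)^-1 *: (dmul E1 (dmul E1 E1) + dmul E2 (dmul E2 E2))
        = \sum_(pr <- s) gcomm pr.1.1 pr.2.1 pr.1.2 pr.2.2.
Proof.
have hE := E_id hk hE1; subst E1.
have hE' := E_id hk hE2; subst E2.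
exists [seq ((pr.1.1, iM pr.1.2), (pr.2.1, iM pr.2.2)) | pr <- cs]; split.
  have H : all (fun q => all (fun p => deg p.2 == q.1.1) q.1.2 && all (fun p => deg p.2 == q.2.1) q.2.2) cs.
    by vm_compute.
  move=> pr /mapP [q hq ->] /=.
  by have /andP [h1 h2] := allP H q hq; split; apply: (homog_iM hk).
rewrite big_map sum_gcomm.
rewrite hP (PP_eval hbr _ _ (br_ok hk hbr _ _ _ _) (br_ok hk hbr _ _ _ _) (br_ok hk hbr _ _ _ _)
   (br_ok hk hbr _ _ _ _) (br_ok hk hbr _ _ _ _) (br_ok hk hbr _ _ _ _)
   (br_ok hk hbr _ _ _ _) (br_ok hk hbr _ _ _ _) (br_ok hk hbr _ _ _ _)).
rewrite -(ratr_nat_k k 6) -(ratrV_k hk) ?(prodAE hk); reify hk.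
by apply: (iM_eq hk); vm_compute.
Qed.

End Main2.

Theorem theorem6p5p1 (k : fieldType) (hk : [pchar k] =i pred0)
    (br : D k -> D k -> T2 k) (hbr : double_schouten br)
    (E1 E2 : D k) (hE1 : is_E v1 E1) (hE2 : is_E v2 E2) :
  [/\ (* {P,P} = 1/6 (E1^3 + E2^3)  modulo  [D_B A, D_B A] *)
      exists s : seq ((nat * D k) * (nat * D k)),
        (forall pr, pr \in s -> homog pr.1.1 pr.1.2 /\ homog pr.2.1 pr.2.2) /\
        mult (br (@Pbiv k) (@Pbiv k))
          - (6%:R)^-1 *: (dmul E1 (dmul E1 E1) + dmul E2 (dmul E2 E2))
        = \sum_(pr <- s) gcomm pr.1.1 pr.2.1 pr.1.2 pr.2.2,
      (* {P,Phi_1} = -1/2 (E_1 Phi_1 + Phi_1 E_1) *)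
      mult (br (@Pbiv k) (@Phi1 k))
        = - (@onehalf k *: (dmul E1 (@Phi1 k) + dmul (@Phi1 k) E1)) &
      (* {P,Phi_2} = -1/2 (E_2 Phi_2 + Phi_2 E_2) *)
      mult (br (@Pbiv k) (@Phi2 k))
        = - (@onehalf k *: (dmul E2 (@Phi2 k) + dmul (@Phi2 k) E2))].
Proof.
split.
- exact: (part1 hk hbr hE1 hE2).
- exact: (part2 hk hbr hE1).
- exact: (part3 hk hbr hE2).
Qed.
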